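(* Consider a sequence of samples indexed by $N$ of units $i=1,\dots,N$ observed at times $t=-L,\dots,0,1$ with binary treatment $A_i$ applied at $t=1$, where potential outcomes satisfy $Y_{it}(0)-Y_{i,t-1}(0)=\delta_t+\epsilon_{it,0}$ and $Y_{it}(1)-Y_{it}(0)=\mathbb{I}(t=1)(\psi+\epsilon_{it,1})$, with $\psi_i=\psi+\epsilon_{i1,1}$. Assume $Y_{it}=\mathbb{I}(t=1)A_iY_{it}(1)+(1-\mathbb{I}(t=1)A_i)Y_{it}(0)$; $N^{-1}\sum_{i=1}^N\epsilon_{it,a}\to 0$ almost surely for $a=0,1$; $N^{-1}\sum_iA_i\to p\in(0,1)$ almost surely; $1\le\sum_iA_i\le N-1$; and $|\epsilon_{it,a}|\le\zeta$ for all $i,t,a$. Let $\hat\psi_i^{DiD}$ be the unit-level difference-in-differences estimator ($Y_{i1}-Y_{i0}-[\sum_j(1-A_j)]^{-1}\sum_j(1-A_j)(Y_{j1}-Y_{j0})$ for treated $i$, and $Y_{i0}+[\sum_jA_j]^{-1}\sum_jA_j(Y_{j1}-Y_{j0})-Y_{i1}$ for untreated $i$), and $\tilde\tau_i=\{\tau\ge 0:\psi_i\in[\hat\psi_i^{DiD}-\tau,\hat\psi_i^{DiD}+\tau]\}$. (i) If in addition $[\sum_iA_i]^{-1}\sum_iA_i\epsilon_{i1,0}\to 0$ almost surely as $N\to\infty$, then there is a sequence $r_N\to 0$ almost surely such that for every treated unit $i$, every $q_0\ge\zeta+r_N$ lies in $\tilde\tau_i$. (ii) If in addition both $[\sum_iA_i]^{-1}\sum_iA_i\epsilon_{i1,0}\to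 0$ and $[\sum_iA_i]^{-1}\sum_iA_i\epsilon_{i1,1}\to 0$ almost surely, then there is a sequence $r_N\to 0$ almost surely such that for every untreated unit $i$, every $q_1\ge 2\zeta+r_N$ lies in $\tilde\tau_i$. *)

(* Defs.v *)
From HB Require Import structures.
From mathcomp Require Import all_boot all_order all_algebra.
From mathcomp Require Import all_classical all_reals all_analysis.
Set Implicit Arguments. Unset Strict Implicit. Unset Printing Implicit Defensive.
Import Order.TTheory GRing.Theory Num.Theory.
Local Open Scope ring_scope.

Section DiD.
Variable R : realType.

Definition obsY (A : nat -> bool) (Y0 Y1 : nat -> int -> R) (i : nat) (t : int) : R :=
  ((t == 1) && A i)%:R * Y1 i t + (1 - ((t == 1) && A i)%:R) * Y0 i t.

Definition psi_did (N : nat) (A : nat -> bool) (Y : nat -> int -> R) (i : nat) : R :=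
  if A i then
    Y i 1 - Y i 0
    - (\sum_(j < N) (1 - (A j)%:R))^-1 * \sum_(j < N) (1 - (A j)%:R) * (Y j 1 - Y j 0)
  else
    Y i 0 + (\sum_(j < N) (A j)%:R)^-1 * \sum_(j < N) (A j)%:R * (Y j 1 - Y j 0) - Y i 1.

Definition tau_tilde (psi_i psihat : R) : set R :=
  [set tau | 0 <= tau /\ psihat - tau <= psi_i <= psihat + tau].

End DiD.

(* Main.v *)
Require Import Defs.
From HB Require Import structures.
From mathcomp Require Import all_boot all_order all_algebra.
From mathcomp Require Import all_classical all_reals all_analysis.
Import Order.TTheory GRing.Theory Num.Theory.
Import numFieldNormedType.Exports.
Local Open Scope classical_set_scope.
Local Open Scope ring_scope.

From mathcomp Require Import zify ring lra.

Section Helpers.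
Variable R : realType.

Lemma avg_shift n (w f : 'I_n -> R) (c : R) : \sum_(j < n) w j != 0 ->
 (\sum_(j < n) w j)^-1 * \sum_(j < n) w j * (c + f j)
   = c + (\sum_(j < n) w j)^-1 * \sum_(j < n) w j * f j.
Proof.
move=> H; rewrite (@eq_bigr _ _ _ _ _ _ (fun j => w j * (c + f j)) (fun j => w j * c + w j * f j)); last by move=> j _; rewrite mulrDr.
by rewrite big_split /= -mulr_suml mulrDr mulrA mulVf // mul1r.
Qed.

Lemma obsY_1T (A : nat -> bool) (Y0 Y1 : nat -> int -> R) i : A i ->
  obsY A Y0 Y1 i 1 = Y1 i 1.
Proof. by move=> Ai; rewrite /obsY Ai eqxx /= mul1r subrr mul0r addr0. Qed.

Lemma obsY_1F (A : nat -> bool) (Y0 Y1 : nat -> int -> R) i : ~~ A i ->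
  obsY A Y0 Y1 i 1 = Y0 i 1.
Proof. by move=> /negbTE Ai; rewrite /obsY Ai eqxx /= mul0r subr0 mul1r add0r. Qed.

Lemma obsY_0 (A : nat -> bool) (Y0 Y1 : nat -> int -> R) i :
  obsY A Y0 Y1 i 0 = Y0 i 0.
Proof. by rewrite /obsY /= mul0r subr0 mul1r add0r. Qed.

Lemma sum_compl n (a : 'I_n -> bool) :
  \sum_(j < n) (1 - (a j)%:R) = n%:R - (\sum_(j < n) nat_of_bool (a j))%:R :> R.
Proof. by rewrite sumrB sumr_const card_ord natr_sum. Qed.

Lemma sum_compl_f n (a : 'I_n -> bool) (f : 'I_n -> R) :
  \sum_(j < n) (1 - (a j)%:R) * f j = \sum_(j < n) f j - \sum_(j < n) (a j)%:R * f j.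
Proof. by rewrite -sumrB; apply: eq_bigr => j _; rewrite mulrBl mul1r. Qed.

Lemma normB2 (x : R) : - `|x| <= x /\ x <= `|x|.
Proof. by apply/andP; rewrite -ler_norml. Qed.

Lemma normB2' (x e : R) : `|x| <= e -> - e <= x /\ x <= e.
Proof. by rewrite ler_norml => /andP. Qed.

End Helpers.
Arguments normB2 {R}.
Arguments normB2' {R}.

(* Triangular array: for sample size N, units i < N (i.e. i = 0..N-1),
   times t : int with -L <= t <= 1.  eps0 / eps1 are epsilon_{it,0} / epsilon_{it,1}. *)
Theorem corollary1 (d : measure_display) (T : measurableType d) (R : realType)
  (P : probability T R) (L : nat)
  (A : nat -> nat -> T -> bool)
  (Y0 Y1 : nat -> nat -> int -> T -> R)
  (eps0 eps1 : nat -> nat -> int -> T -> R)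
  (delta : int -> R) (psi p zeta : R)
  (Hpo0 : forall (N i : nat) (t : int) (w : T), (i < N)%N -> - (L%:Z) < t <= 1 ->
     Y0 N i t w - Y0 N i (t - 1) w = delta t + eps0 N i t w)
  (Hpo1 : forall (N i : nat) (t : int) (w : T), (i < N)%N -> - (L%:Z) <= t <= 1 ->
     Y1 N i t w - Y0 N i t w = (t == 1)%:R * (psi + eps1 N i t w))
  (Heps0 : forall t : int, - (L%:Z) <= t <= 1 ->
     {ae P, forall w, (fun N : nat => N%:R^-1 * \sum_(i < N) eps0 N i t w) @ \oo --> 0})
  (Heps1 : forall t : int, - (L%:Z) <= t <= 1 ->
     {ae P, forall w, (fun N : nat => N%:R^-1 * \sum_(i < N) eps1 N i t w) @ \oo --> 0})
  (Hp : 0 < p < 1)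
  (HA : {ae P, forall w, (fun N : nat => N%:R^-1 * \sum_(i < N) (A N i w)%:R : R) @ \oo --> p})
  (Hbal : forall N w, (2 <= N)%N ->
     (1 <= \sum_(i < N) nat_of_bool (A N i w) <= N - 1)%N)
  (Hbd : forall (N i : nat) (t : int) (w : T), (i < N)%N -> - (L%:Z) <= t <= 1 ->
     `|eps0 N i t w| <= zeta /\ `|eps1 N i t w| <= zeta) :
  let Y N w := obsY (A N ^~ w) (fun i t => Y0 N i t w) (fun i t => Y1 N i t w) in
  let psi_i N i w := psi + eps1 N i 1 w in
  let psihat N i w := psi_did N (A N ^~ w) (Y N w) i in
  (* (i) treated units *)
  ({ae P, forall w, (fun N : nat => (\sum_(i < N) (A N i w)%:R : R)^-1 *
        \sum_(i < N) (A N i w)%:R * eps0 N i 1 w) @ \oo --> 0} ->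
   exists r : nat -> T -> R,
     {ae P, forall w, (fun N : nat => r N w) @ \oo --> 0} /\
     forall N w, (2 <= N)%N -> forall i, (i < N)%N -> A N i w ->
       forall q0, zeta + r N w <= q0 -> tau_tilde (psi_i N i w) (psihat N i w) q0)
  /\
  (* (ii) untreated units *)
  ({ae P, forall w, (fun N : nat => (\sum_(i < N) (A N i w)%:R : R)^-1 *
        \sum_(i < N) (A N i w)%:R * eps0 N i 1 w) @ \oo --> 0} ->
   {ae P, forall w, (fun N : nat => (\sum_(i < N) (A N i w)%:R : R)^-1 *
        \sum_(i < N) (A N i w)%:R * eps1 N i 1 w) @ \oo --> 0} ->
   exists r : nat -> T -> R,
     {ae P, forall w, (fun N : nat => r N w) @ \oo --> 0} /\
     forall N w, (2 <= N)%N -> forall i, (i < N)%N -> ~~ A N i w ->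
       forall q1, 2 * zeta + r N w <= q1 -> tau_tilde (psi_i N i w) (psihat N i w) q1).
Proof.
move=> Y psi_i psihat.
have Ht1 : - (L%:Z) < (1:int) <= 1 by lia.
have Ht1' : - (L%:Z) <= (1:int) <= 1 by lia.
split.
- move=> H0.
  pose mc N w := (\sum_(j < N) (1 - (A N j w)%:R))^-1 *
                 \sum_(j < N) (1 - (A N j w)%:R) * eps0 N j 1 w.
  exists (fun N w => `|mc N w|); split.
  + apply: filterS3 HA (Heps0 1 Ht1') H0 => w hA hE hS.
    rewrite -[X in _ --> X](normr0 R); apply: cvg_norm.
    have Hg : (fun N : nat => (1 - N%:R^-1 * \sum_(i < N) (A N i w)%:R)^-1 *
        (N%:R^-1 * \sum_(i < N) eps0 N i 1 w - (N%:R^-1 * \sum_(i < N) (A N i w)%:R) *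
          ((\sum_(i < N) (A N i w)%:R)^-1 * \sum_(i < N) (A N i w)%:R * eps0 N i 1 w)))
        @ \oo --> (1 - p)^-1 * (0 - p * 0).
      apply: cvgM.
        apply: cvgV.
          by rewrite subr_eq0 gt_eqF //; case/andP: Hp.
        by apply: cvgB; [exact: cvg_cst | exact: hA].
      by apply: cvgB; [exact: hE | exact: cvgM hA hS].
    rewrite mulr0 subrr mulr0 in Hg.
    apply: cvg_trans Hg; apply: near_eq_cvg; near=> N.
    have N2 : (2 <= N)%N by near: N; exists 2%N.
    have /andP[b1 b2] := Hbal N w N2.
    rewrite /mc sum_compl sum_compl_f -!natr_sum.
    have kne : (\sum_(j < N) nat_of_bool (A N j w))%:R != 0 :> R.
      by rewrite pnatr_eq0 -lt0n.
    have nne : N%:R != 0 :> R by rewrite pnatr_eq0; lia.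
    have nkne : N%:R - (\sum_(j < N) nat_of_bool (A N j w))%:R != 0 :> R.
      rewrite subr_eq0 eqr_nat; lia.
    by field; rewrite nkne kne nne.
    Unshelve. all: end_near.
  + move=> N w N2 i iN Ai q0 Hq.
    have [e0b e1b] := Hbd N i 1 w iN Ht1'.
    have zeta0 : 0 <= zeta := le_trans (normr_ge0 _) e0b.
    have Hbal' := Hbal N w N2.
    have Wne : \sum_(j < N) (1 - (A N j w)%:R) != 0 :> R.
      rewrite sum_compl subr_eq0 eqr_nat; lia.
    have Hsum : \sum_(j < N) (1 - (A N j w)%:R) * (Y N w j 1 - Y N w j 0)
        = \sum_(j < N) (1 - (A N j w)%:R) * (delta 1 + eps0 N j 1 w).
      apply: eq_bigr => j _; case Aj: (A N j w).
        by rewrite subrr !mul0r.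
      rewrite /Y obsY_1F ?Aj // obsY_0.
      by rewrite -(Hpo0 N j 1 w (ltn_ord j) Ht1) subrr.
    have h1 := Hpo1 N i 1 w iN Ht1'; rewrite eqxx mul1r in h1.
    have h0 := Hpo0 N i 1 w iN Ht1; rewrite subrr in h0.
    have Hpsihat : psihat N i w = psi + eps1 N i 1 w + eps0 N i 1 w - mc N w.
      rewrite /psihat /psi_did Ai Hsum avg_shift // /Y obsY_1T // obsY_0.
      rewrite -/(mc N w); lra.
    rewrite /tau_tilde /psi_i /=.
    have [m1 m2] := normB2 (mc N w).
    have [a1 a2] := normB2' _ _ e0b.
    split; first lra.
    rewrite Hpsihat; apply/andP; split; lra.
- move=> H0 H1.
  pose mt0 N w := (\sum_(j < N) (A N j w)%:R)^-1 *
                 \sum_(j < N) (A N j w)%:R * eps0 N j 1 w.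
  pose mt1 N w := (\sum_(j < N) (A N j w)%:R)^-1 *
                 \sum_(j < N) (A N j w)%:R * eps1 N j 1 w.
  exists (fun N w => `|mt0 N w| + `|mt1 N w|); split.
  + apply: filterS2 H0 H1 => w h0 h1.
    have := cvgD (cvg_norm h0) (cvg_norm h1).
    rewrite normr0 addr0; exact.
  + move=> N w N2 i iN Ai q0 Hq.
    have [e0b e1b] := Hbd N i 1 w iN Ht1'.
    have zeta0 : 0 <= zeta := le_trans (normr_ge0 _) e0b.
    have Hbal' := Hbal N w N2.
    have Wne : \sum_(j < N) (A N j w)%:R != 0 :> R.
      rewrite -natr_sum pnatr_eq0 -lt0n; by case/andP: Hbal'.
    have Hsum : \sum_(j < N) (A N j w)%:R * (Y N w j 1 - Y N w j 0)
        = \sum_(j < N) (A N j w)%:R * ((delta 1 + psi) + (eps0 N j 1 w + eps1 N j 1 w)).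
      apply: eq_bigr => j _; case Aj: (A N j w); last by rewrite !mul0r.
      rewrite /Y obsY_1T ?Aj // obsY_0.
      have h1 := Hpo1 N j 1 w (ltn_ord j) Ht1'; rewrite eqxx mul1r in h1.
      have h0 := Hpo0 N j 1 w (ltn_ord j) Ht1; rewrite subrr in h0.
      congr (_ * _); lra.
    have Hmt : (\sum_(j < N) (A N j w)%:R)^-1 *
        \sum_(j < N) (A N j w)%:R * (eps0 N j 1 w + eps1 N j 1 w) = mt0 N w + mt1 N w.
      rewrite (@eq_bigr _ _ _ _ _ _ (fun j : 'I_N => (A N j w)%:R * (eps0 N j 1 w + eps1 N j 1 w))
        (fun j : 'I_N => (A N j w)%:R * eps0 N j 1 w + (A N j w)%:R * eps1 N j 1 w));
        last by move=> j _; rewrite mulrDr.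
      by rewrite big_split /= mulrDr.
    have h0 := Hpo0 N i 1 w iN Ht1; rewrite subrr in h0.
    have Hpsihat : psihat N i w = psi - eps0 N i 1 w + mt0 N w + mt1 N w.
      rewrite /psihat /psi_did (negbTE Ai) Hsum avg_shift // Hmt /Y obsY_1F // obsY_0.
      lra.
    rewrite /tau_tilde /psi_i /=.
    have [m1 m2] := normB2 (mt0 N w).
    have [m3 m4] := normB2 (mt1 N w).
    have [a1 a2] := normB2' _ _ e0b.
    have [a3 a4] := normB2' _ _ e1b.
    split; first lra.
    rewrite Hpsihat; apply/andP; split; lra.
Qed.
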